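(* There exists an absolute constant $C>0$ such that for any integers $m\ge2$ and $M\ge m$, $$\sum_{0\le j_1<j_2<\dots<j_m<M}\ \prod_{k=1}^{m-1}\frac{j_{k+1}-j_k}{j_k+1}\le \log(M+1)\left(\frac{CM}{m^2}\right)^m,$$ where the sum is over all integer vectors $(j_1,\dots,j_m)$ with $0\le j_1<\dots<j_m<M$. *)

(* Defs.v *)
From mathcomp Require Import all_boot all_order all_algebra.
From mathcomp Require Import all_classical all_reals all_analysis.
From mathcomp Require Import Rstruct Rstruct_topology.
Set Implicit Arguments. Unset Strict Implicit. Unset Printing Implicit Defensive.
Import Order.TTheory GRing.Theory Num.Theory.
Local Open Scope ring_scope.

(* The summand for an increasing vector j = (j_1,...,j_m) (0-indexed here):
   prod_{k=1}^{m-1} (j_{k+1} - j_k) / (j_k + 1). *)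
Definition corr_term (m : nat) (j : nat -> nat) : Rdefinitions.R :=
  \prod_(k < m.-1) (((j k.+1 - j k)%N)%:R / ((j k).+1)%:R).

Definition corr_sum (m M : nat) : Rdefinitions.R :=
  \sum_(t : m.-tuple 'I_M | sorted ltn (map val t))
     corr_term m (fun k => nth 0%N (map val t) k).

(* Main.v *)
Require Import Defs.
From mathcomp Require Import all_boot all_order all_algebra.
From mathcomp Require Import all_classical all_reals all_analysis.
From mathcomp Require Import Rstruct Rstruct_topology.
From mathcomp Require Import ring lra.
Import Order.TTheory GRing.Theory Num.Theory.
Local Open Scope ring_scope.
Notation R := Rdefinitions.R.
Lemma sum_tuple0 (T : finType) (F : seq T -> R) :
  \sum_(t : 0.-tuple T) F t = F [::].
Proof.
rewrite (big_pred1 [tuple]) //= => t; rewrite [t]tuple0; exact: esym (eqxx _).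
Qed.

Lemma sum_tuple_cons (T : finType) n (F : seq T -> R) :
  \sum_(t : n.+1.-tuple T) F t = \sum_(x : T) \sum_(t : n.-tuple T) F (x :: t).
Proof.
rewrite pair_big /=.
pose h (p : T * n.-tuple T) := [tuple of p.1 :: p.2].
pose g (t : n.+1.-tuple T) := (thead t, [tuple of behead t]).
have hK : cancel h g.
  by case=> x t; rewrite /g /h /=; congr (_, _); apply: val_inj.
have gK : cancel g h.
  by move=> t; apply: val_inj; rewrite /g /h /= [in RHS](tuple_eta t).
rewrite (reindex h) //=; exists g => ? _; [exact: hK | exact: gK].
Qed.

Lemma sum_tuple_rcons (T : finType) n (F : seq T -> R) :
  \sum_(t : n.+1.-tuple T) F t = \sum_(t : n.-tuple T) \sum_(y : T) F (rcons t y).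
Proof.
elim: n F => [|n IH] F.
  rewrite sum_tuple_cons (@sum_tuple0 T (fun s => \sum_y F (rcons s y))).
  by apply: eq_bigr => x _; rewrite (@sum_tuple0 T (fun s => F (x :: s))).
rewrite (@sum_tuple_cons T n.+1 F) (@sum_tuple_cons T n (fun s => \sum_y F (rcons s y))).
apply: eq_bigr => x _; rewrite (IH (fun s => F (x :: s))) //.
Qed.

Lemma sorted_rcons2 (s : seq nat) a b :
  sorted ltn (rcons (rcons s a) b) = sorted ltn (rcons s a) && (a < b)%N.
Proof. by case: s => [|x s] /=; rewrite ?rcons_path ?last_rcons ?andbT. Qed.

Lemma corr_rcons (s : seq nat) a b :
  corr_term (size s).+2 (nth 0%N (rcons (rcons s a) b)) =
  corr_term (size s).+1 (nth 0%N (rcons s a)) * ((b - a)%N%:R / (a.+1)%:R).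
Proof.
rewrite /corr_term /= big_ord_recr /=; congr (_ * _).
  apply: eq_bigr => i _ /=.
  have hi := ltn_ord i.
  rewrite !nth_rcons !size_rcons.
  by rewrite !ltnS hi (ltnW hi).
by rewrite !nth_rcons !size_rcons ltnSn !ltnn !eqxx.
Qed.

Fixpoint Hs (k z : nat) : R :=
  if k is k'.+1 then \sum_(y < z) ((z - y)%N%:R / (y.+1)%:R * Hs k' y) else 1.

Definition Q (M k z : nat) : R :=
  \sum_(t : k.-tuple 'I_M | sorted ltn (rcons (map val t) z))
     corr_term k.+1 (nth 0%N (rcons (map val t) z)).

Lemma Q_eq M k z : (z <= M)%N -> Q M k z = Hs k z.
Proof.
elim: k z => [|k IH] z zM.
  rewrite /Q big_mkcond /=.
  rewrite (@sum_tuple0 _ (fun s : seq 'I_M => if sorted ltn (rcons (map val s) z)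
     then corr_term 1 (nth 0%N (rcons (map val s) z)) else 0)) /=.
  by rewrite /corr_term big_ord0.
rewrite /Q big_mkcond /=.
rewrite (@sum_tuple_rcons _ k (fun s : seq 'I_M => if sorted ltn (rcons (map val s) z)
     then corr_term k.+2 (nth 0%N (rcons (map val s) z)) else 0)) /=.
under eq_bigr => t _.
  under eq_bigr => y _.
    rewrite map_rcons sorted_rcons2.
    have -> : k.+2 = (size (map val t)).+2 by rewrite size_map size_tuple.
    rewrite corr_rcons size_map size_tuple.
    over.
  over.
rewrite /= exchange_big /=.
rewrite (big_ord_widen M (fun y => (z - y)%N%:R / y.+1%:R * Hs k y) zM).
rewrite [RHS]big_mkcond /=; apply: eq_bigr => y _.
case: ifP => yz; last first.
  by apply: big1 => t _; rewrite andbF.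
rewrite -IH; last exact: ltnW (leq_trans yz zM).
rewrite /Q big_distrr [RHS]big_mkcond /=; apply: eq_bigr => t _.
by rewrite andbT; case: ifP => // _; rewrite mulrC.
Qed.

Lemma hockey k z : (\sum_(y < z) 'C(y + k, k))%N = 'C(z + k, k.+1).
Proof.
elim: z => [|z IH]; first by rewrite big_ord0 bin_small.
by rewrite big_ord_recr /= IH addSn binS.
Qed.

Lemma hockey2 k z : (\sum_(y < z) (z - y) * 'C(y + k, k))%N = 'C(z + k.+1, k.+2).
Proof.
elim: z => [|z IH]; first by rewrite big_ord0 bin_small.
rewrite big_ord_recr /= subSnn mul1n.
rewrite (eq_bigr (fun y : 'I_z => (z - y) * 'C(y + k, k) + 'C(y + k, k))%N); last first.
  by move=> y _; rewrite subSn 1?ltnW // mulSn addnC.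
rewrite big_split /= IH hockey.
by rewrite addSn binS addnS binS addnA.
Qed.

Lemma bern (x : R) n : 0 <= x -> (1 + x) ^+ n * (1 - n%:R * x) <= 1.
Proof.
move=> x0; elim: n => [|n IH]; first by rewrite expr0 mul0r subr0 mulr1.
have p0 : 0 <= (1 + x) ^+ n by apply: exprn_ge0; lra.
have h : 0 <= (1 + x) ^+ n * (x * x) * (n%:R + 1).
  apply: mulr_ge0; [apply: mulr_ge0 => //; nra | have := ler0n R n; lra].
rewrite exprS -natr1; nra.
Qed.

Lemma step4 (m : nat) : (m.+1%:R : R) ^+ m <= 4 * m%:R ^+ m.
Proof.
case: m => [|m]; first by rewrite !expr0; lra.
set a : R := m.+1%:R.
have a1 : 1 <= a by rewrite /a ler1n.
have a0 : 0 < a by lra.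
set x : R := (2 * a)^-1.
have x0 : 0 < x by rewrite /x invr_gt0; lra.
have hx : (m.+1)%:R * x = 2^-1 by rewrite -/a /x invfM mulrA mulrC mulrA mulVf ?mul1r //; lra.
have hb := @bern x m.+1 (ltW x0); rewrite hx in hb.
have p0 : 0 <= (1 + x) ^+ m.+1 by apply: exprn_ge0; lra.
have hb2 : (1 + x) ^+ m.+1 <= 2 by lra.
have e1 : (m.+2%:R : R) = a * (1 + a^-1) by rewrite mulrDr mulr1 mulfV ?natr1 //; lra.
have e2 : 1 + a^-1 <= (1 + x) ^+ 2.
  have : a^-1 = 2 * x by rewrite /x invfM mulrA mulfV ?mul1r //; lra.
  move=> ->; nra.
rewrite e1 exprMn mulrC ler_pM2r; last by apply: exprn_gt0.
apply: (le_trans (y := ((1 + x) ^+ 2) ^+ m.+1)).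
  apply: lerXn2r; last exact: e2.
    rewrite nnegrE; apply: addr_ge0 => //; apply: ltW; rewrite invr_gt0 //.
  by rewrite nnegrE sqr_ge0.
rewrite -exprM mulnC exprM.
have -> : (4 : R) = 2 ^+ 2 by rewrite expr2; lra.
apply: lerXn2r => //; rewrite nnegrE; lra.
Qed.

Lemma fact_bound (m : nat) : (m%:R : R) ^+ m <= 4 ^+ m * (m`!)%:R.
Proof.
elim: m => [|m IH]; first by rewrite !expr0 mul1r fact0.
rewrite exprS factS natrM exprS.
have h := step4 m.
have p0 : 0 <= (m.+1%:R : R) by apply: ler0n.
apply: (le_trans (ler_wpM2l p0 h)).
have -> : (4 : R) * 4 ^+ m * (m.+1%:R * m`!%:R) = m.+1%:R * (4 * (4 ^+ m * m`!%:R)) by ring.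
apply: (ler_wpM2l p0); apply: ler_wpM2l; [exact: ler0n | exact: IH].
Qed.

Lemma key_nat k : (2 ^ k.+2 * (k.+2 ^ 2) ^ k.+2 <= 128 ^ k.+2 * (k.+1)`! ^ 2)%N.
Proof.
set m := k.+2.
have h := fact_bound m.
rewrite -natrX -natrX -natrM ler_nat /m factS -/m in h.
set X := (m ^ m)%N in h *; set F := (k.+1)`! in h *; set Q := (4 ^ m)%N in h *.
have hm : (m * m <= Q)%N.
  have := ltnW (ltn_expl m (isT : (1 < 2)%N)).
  move=> e; rewrite /Q (_ : 4 = 2 * 2)%N // expnMn.
  exact: leq_mul.
have e1 : ((m ^ 2) ^ m = X * X)%N by rewrite -expnM mulnC expnM expnS expn1.
have e2 : (128 ^ m = 2 ^ m * (Q * Q * Q))%N by rewrite /Q -!expnMn.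
rewrite e1 e2 -mulnA leq_mul2l; apply/orP; right.
apply: (leq_trans (leq_mul h h)).
have -> : (Q * (m * F) * (Q * (m * F)) = (Q * Q) * (m * m) * (F * F))%N by ring.
rewrite expnS expn1 leq_mul //. 
by rewrite leq_mul.
Qed.

Lemma L_le M : \sum_(y < M) (y.+1%:R : R)^-1 <= 2 * ln (M.+1%:R : R).
Proof.
have st : forall y : nat, (y.+1%:R : R)^-1 <= 2 * (ln (y.+2%:R : R) - ln (y.+1%:R)).
  move=> y; rewrite -[y.+2]addn1 natrD /=.
  have a0 : (0 : R) < y.+1%:R by rewrite ltr0n.
  have a10 : (1 : R) <= y.+1%:R by rewrite ler1n.
  move: (y.+1%:R : R) a0 a10 => a a0 a10.
  have a1 : 0 < a + 1 by lra.
  have b0 : 0 < (a + 1)^-1 by rewrite invr_gt0.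
  have bl1 : (a + 1)^-1 < 1 by rewrite invf_lt1 //; lra.
  have e : a / (a + 1) = 1 + (- (a + 1)^-1) by field; lra.
  have hl := @le_ln1Dx _ (- (a + 1)^-1) ltac:(lra).
  rewrite -e ln_div ?posrE // in hl.
  rewrite -opprB lerN2 in hl.
  apply: (le_trans (y := 2 * (a + 1)^-1)); last by apply: ler_wpM2l.
  have e2 : 2 * (a + 1)^-1 - a^-1 = (a - 1) / (a * (a + 1)) by field; lra.
  rewrite -subr_ge0 e2; apply: divr_ge0.
    lra.
  by apply: mulr_ge0; lra.
apply: (@le_trans _ _ (\sum_(y < M) 2 * (ln (y.+2%:R : R) - ln (y.+1%:R)))).
  by apply: ler_sum => y _; exact: st.
rewrite -big_distrr /=.
pose f (y : nat) : R := ln (y.+1%:R).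
rewrite -(big_mkord xpredT (fun y => f y.+1 - f y)) telescope_sumr // /f ln1 subr0.
by [].
Qed.

Definition Lm (M : nat) : R := \sum_(y < M) (y.+1%:R : R)^-1.

Lemma Lm_ge0 M : 0 <= Lm M.
Proof. by apply: sumr_ge0 => y _; rewrite invr_ge0 ler0n. Qed.

Lemma Lz_le M z : (z <= M)%N -> \sum_(y < z) (y.+1%:R : R)^-1 <= Lm M.
Proof.
move=> zM; rewrite /Lm (big_ord_widen M (fun y => (y.+1%:R : R)^-1) zM).
rewrite big_mkcond /=; apply: ler_sum => y _.
by case: ifP => // _; rewrite invr_ge0 ler0n.
Qed.

Lemma Hs_bound M k z : (z <= M)%N ->
  Hs k.+1 z <= Lm M * (z.+1)%:R * ('C(z + k, k))%:R / ((k.+1)`!)%:R.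
Proof.
elim: k z => [|k IH] z zM.
  rewrite /= bin0 (_ : ((1`!)%:R : R) = 1) // divr1 mulr1.
  apply: (@le_trans _ _ (\sum_(y < z) (z.+1%:R : R) * (y.+1%:R)^-1)).
    apply: ler_sum => y _; rewrite mulr1; apply: ler_wpM2r.
      by rewrite invr_ge0 ler0n.
    by rewrite ler_nat leqW // leq_subr.
  rewrite -big_distrr /= mulrC; apply: ler_wpM2r; first exact: ler0n.
  exact: Lz_le.
rewrite [Hs _ _]/=.
set f : R := (k.+1)`!%:R.
have f0 : f != 0 by rewrite /f pnatr_eq0 -lt0n fact_gt0.
apply: (@le_trans _ _ (\sum_(y < z) (z - y)%N%:R / y.+1%:R *
   (Lm M * y.+1%:R * 'C(y + k, k)%:R / f))).
  apply: ler_sum => y _; apply: ler_wpM2l.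
    by apply: divr_ge0; apply: ler0n.
  apply: IH; exact: ltnW (leq_trans (ltn_ord y) zM).
rewrite (eq_bigr (fun y : 'I_z => Lm M / f * ((z - y) * 'C(y + k, k))%N%:R)); last first.
  move=> y _; rewrite natrM; field.
  by rewrite -/f f0 /= addrC natr1 pnatr_eq0.
rewrite -mulr_sumr -natr_sum hockey2.
set n := (z + k.+1)%N.
have hB : (k.+2%:R : R) * 'C(n, k.+2)%:R = z%:R * 'C(n, k.+1)%:R.
  by rewrite -!natrM mul_bin_left /n addnK.
have K0 : (k.+2%:R : R) != 0 by rewrite pnatr_eq0.
have eB : ('C(n, k.+2)%:R : R) = z%:R * 'C(n, k.+1)%:R / k.+2%:R.
  by rewrite -hB mulrAC divff ?mul1r.
rewrite eB factS natrM -/f.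
have e : Lm M * z.+1%:R * 'C(n, k.+1)%:R / (k.+2%:R * f)
   - Lm M / f * (z%:R * 'C(n, k.+1)%:R / k.+2%:R)
   = Lm M * 'C(n, k.+1)%:R / (k.+2%:R * f).
  rewrite -[z.+1]addn1 !natrD; field.
  by rewrite -/f f0 -natrD pnatr_eq0 add2n.
rewrite -subr_ge0 e; apply: divr_ge0; apply: mulr_ge0;
  by [exact: Lm_ge0 | exact: ler0n].
Qed.

Lemma corr_sum_Hs M k : corr_sum k.+1 M = \sum_(z < M) Hs k z.
Proof.
rewrite /corr_sum big_mkcond /=.
rewrite (@sum_tuple_rcons _ k (fun s : seq 'I_M => if sorted ltn (map val s)
   then corr_term k.+1 (nth 0%N (map val s)) else 0)) /=.
rewrite exchange_big /=; apply: eq_bigr => z _.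
rewrite -(Q_eq M k z (ltnW (ltn_ord z))) /Q [RHS]big_mkcond /=.
by apply: eq_bigr => t _; rewrite map_rcons.
Qed.

Lemma ffact_le_exp n m : (n ^_ m <= n ^ m)%N.
Proof.
elim: m n => [|m IH] n; first by [].
rewrite ffactnS expnS leq_mul2l; apply/orP; right.
apply: leq_trans (IH n.-1) _; case: (m) => [|m'] //; rewrite leq_exp2r // leq_pred //.
Qed.

Lemma final_nat k M Cb : (Cb * (k.+1)`! <= (2 * M) ^ k.+1)%N ->
  (2 * M * Cb * (k.+2 ^ 2) ^ k.+2 <= 128 ^ k.+2 * M ^ k.+2 * (k.+1)`!)%N.
Proof.
move=> h.
have F0 : (0 < (k.+1)`!)%N by apply: fact_gt0.
rewrite -(leq_pmul2r F0).
set F := (k.+1)`! in h F0 *; set P := ((k.+2 ^ 2) ^ k.+2)%N.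
have -> : (2 * M * Cb * P * F = 2 * M * (Cb * F) * P)%N by ring.
apply: (@leq_trans (2 * M * (2 * M) ^ k.+1 * P)%N).
  by rewrite leq_mul2r leq_mul2l h !orbT.
have -> : (2 * M * (2 * M) ^ k.+1 * P = M ^ k.+2 * (2 ^ k.+2 * P))%N.
  by rewrite expnMn !expnS; ring.
have -> : (128 ^ k.+2 * M ^ k.+2 * F * F = M ^ k.+2 * (128 ^ k.+2 * F ^ 2))%N.
  by ring.
by rewrite leq_mul2l key_nat orbT.
Qed.

Theorem corollary6p3 :
  exists C : Rdefinitions.R, 0 < C /\
    forall m M : nat, (2 <= m)%N -> (m <= M)%N ->
      corr_sum m M <= ln (M.+1%:R) * (C * M%:R / (m%:R ^+ 2)) ^+ m.
Proof.
exists 128; split; first by rewrite ltr0n.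
move=> m M; case: m => [|[|k]] // _ mM.
rewrite corr_sum_Hs.
set F : R := (k.+1)`!%:R.
have F0 : 0 < F by rewrite /F ltr0n fact_gt0.
set Cb := 'C(M + k, k.+1).
apply: (@le_trans _ _ (Lm M * M%:R * Cb%:R / F)).
  apply: (@le_trans _ _ (\sum_(z < M) Lm M * M%:R / F * 'C(z + k, k)%:R)).
    apply: ler_sum => z _.
    apply: (le_trans (@Hs_bound M k z (ltnW (ltn_ord z)))).
    rewrite -/F [X in _ <= X]mulrAC; apply: ler_wpM2r.
      by rewrite invr_ge0 ltW.
    apply: ler_wpM2r; first exact: ler0n.
    apply: ler_wpM2l; first exact: Lm_ge0.
    by rewrite ler_nat ltn_ord.
  by rewrite -mulr_sumr -natr_sum hockey /Cb mulrAC.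
have hC : (Cb * (k.+1)`! <= (2 * M) ^ k.+1)%N.
  rewrite /Cb bin_ffact; apply: (leq_trans (ffact_le_exp _ _)).
  rewrite leq_exp2r // mul2n -addnn leq_add2l.
  by apply: leq_trans mM; apply: leqW; apply: leqW.
have hN := final_nat _ _ _ hC.
have l0 : 0 <= ln (M.+1%:R : R) by apply: ln_ge0; rewrite ler1n.
have hL : Lm M <= 2 * ln (M.+1%:R : R) by apply: L_le.
apply: (@le_trans _ _ (ln (M.+1%:R : R) * (2 * M%:R * Cb%:R / F))).
  have -> : ln (M.+1%:R : R) * (2 * M%:R * Cb%:R / F) =
     2 * ln (M.+1%:R : R) * M%:R * Cb%:R / F by ring.
  apply: ler_wpM2r; first by rewrite invr_ge0 ltW.
  apply: ler_wpM2r; first exact: ler0n.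
  by apply: ler_wpM2r; first exact: ler0n.
apply: (ler_wpM2l l0).
rewrite expr_div_n exprMn -exprM -!natrX.
rewrite ler_pdivrMr // [X in _ <= X]mulrAC ler_pdivlMr; last by rewrite ltr0n expn_gt0.
rewrite /F -!natrM ler_nat expnM.
by [].
Qed.
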